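(* Fix $n$, and let $\mathcal C_0,\mathcal C_1,\dots,\mathcal C_k$ be subsets of $\{1,\dots,2n\}$ such that each $\mathcal C_i$ is a union of chains $C(u)$ ($u$ odd) and every chain $C(u)$ with $u$ odd in $\{1,\dots,2n\}$ lies in exactly one $\mathcal C_i$. Then $$\prod_{i=1}^k f^*(\mathcal C_i)\le f(n)\le 2^{|\mathcal C_0|}\prod_{i=1}^k f(\mathcal C_i).$$
   Context: A set of positive integers is primitive if no element divides another. For odd $u\le 2n$, $C(u)=\{u,2u,4u,\dots\}\cap\{1,\dots,2n\}$. $f(n)$ is the number of $n$-element primitive subsets of $\{1,\dots,2n\}$. For $X\subseteq\{1,\dots,2n\}$, $f(X)$ is the number of maximum-size primitive subsets of $X$, and $f^*(X)$ is the number of maximum-size primitive subsets $A\subseteq X$ such that every multiple in $\{1,\dots,2n\}$ of every element of $A$ belongs to $X$. *)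

(* Defs.v *)
From mathcomp Require Import all_boot.
Set Implicit Arguments. Unset Strict Implicit. Unset Printing Implicit Defensive.

(* The ambient type: 'I_(2n).+1 = {0,...,2n}; the ground set {1,...,2n}
   is the set of its nonzero elements. *)
Notation num n := ('I_(n.*2).+1).

Definition ground (n : nat) : {set num n} := [set x : num n | 0 < val x].

Definition primitive (n : nat) (A : {set num n}) : bool :=
  [forall x in A, forall y in A, (val x %| val y) ==> (x == y)].

(* C(u) = {u, 2u, 4u, ...} ∩ {1,...,2n}  (exponents 0..2n suffice) *)
Definition chain (n : nat) (u : nat) : {set num n} :=
  [set x : num n | (0 < val x) && [exists k : 'I_(n.*2).+1, val x == u * 2 ^ val k]].

Definition fn (n : nat) : nat :=
  #|[set A : {set num n} | [&& A \subset ground n, primitive A & #|A| == n]]|.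

Definition maxprim (n : nat) (X : {set num n}) : nat :=
  \max_(A : {set num n} | (A \subset X) && primitive A) #|A|.

Definition fX (n : nat) (X : {set num n}) : nat :=
  #|[set A : {set num n} | [&& A \subset X, primitive A & #|A| == maxprim X]]|.

Definition fstar (n : nat) (X : {set num n}) : nat :=
  #|[set A : {set num n} | [&& A \subset X, primitive A, #|A| == maxprim X &
      [forall a in A, forall y in ground n, (val a %| val y) ==> (y \in X)]]]|.

(* Main.v *)
Require Import Defs.
From mathcomp Require Import all_boot zify.
Set Implicit Arguments. Unset Strict Implicit. Unset Printing Implicit Defensive.
Definition op (x : nat) := x %/ 2 ^ logn 2 x.

Lemma opK x : op x * 2 ^ logn 2 x = x.
Proof. by rewrite /op divnK // pfactor_dvdnn. Qed.

Lemma op_odd x : 0 < x -> odd (op x).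
Proof.
move=> x0; apply/negP => /negPn ev.
have : 2 ^ (logn 2 x).+1 %| x.
  rewrite -{2}(opK x) expnS; apply: dvdn_mul => //.
  by rewrite dvdn2.
by rewrite pfactor_dvdn // ltnn.
Qed.

Lemma op_mul v k : odd v -> op (v * 2 ^ k) = v.
Proof.
move=> ov; have v0 : 0 < v by case: v ov.
rewrite /op lognM ?expn_gt0 // logn_coprime ?coprime2n // pfactorK //.
by rewrite mulnK // expn_gt0.
Qed.

Lemma op_gt0 x : 0 < x -> 0 < op x.
Proof. by move=> x0; have := @op_odd x x0; case: (op x). Qed.

Lemma op_le x : op x <= x.
Proof. by rewrite /op leq_div. Qed.

Lemma k_lt_pow k : k < 2 ^ k.
Proof. by rewrite ltn_expl. Qed.

Lemma in_chain n u (x : num n) : odd u ->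
  (x \in chain n u) = (0 < val x) && (op x == u).
Proof.
move=> ou; rewrite inE; case x0: (0 < val x) => //=.
apply/existsP/eqP.
  by case=> kk /eqP ->; rewrite op_mul.
move=> ox; have lt : logn 2 x < (n.*2).+1.
  apply: leq_trans (k_lt_pow _) _.
  apply: leq_trans _ (ltnW (ltn_ord x)).
  by rewrite -{2}(opK x) leq_pmull // op_gt0.
by exists (Ordinal lt); rewrite /= -ox opK.
Qed.

Lemma same_op_dvd x y : op x = op y -> (x %| y) || (y %| x).
Proof.
move=> e; rewrite -(opK x) -(opK y) e.
case: (leqP (logn 2 x) (logn 2 y)) => h.
  by rewrite dvdn_mul // dvdn_exp2l.
by rewrite orbC dvdn_mul // dvdn_exp2l // ltnW.
Qed.

Lemma primP n (A : {set num n}) x y : primitive A -> x \in A -> y \in A ->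
  val x %| val y -> x = y.
Proof.
by move=> /forallP /(_ x) /implyP /(_ _) /forallP /(_ y) /implyP H xA yA d;
  apply/eqP; move: (H xA yA) => /implyP; apply.
Qed.

Lemma primS n (A B : {set num n}) : B \subset A -> primitive A -> primitive B.
Proof.
move=> sBA pA; apply/forallP => x; apply/implyP => xB; apply/forallP => y;
  apply/implyP => yB; apply/implyP => d; apply/eqP.
exact: (primP pA (subsetP sBA _ xB) (subsetP sBA _ yB) d).
Qed.

Lemma prim_op n (A : {set num n}) x y : primitive A -> x \in A -> y \in A ->
  op x = op y -> x = y.
Proof.
move=> pA xA yA /same_op_dvd /orP [] d; first exact: (primP pA xA yA d).
by apply/esym; apply: (primP pA yA xA d).
Qed.

Definition top n : {set num n} := [set x : num n | n < val x].

Lemma top_prim n : primitive (top n).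
Proof.
apply/forallP => x; apply/implyP; rewrite inE => xT; apply/forallP => y;
  apply/implyP; rewrite inE => yT; apply/implyP => /dvdnP [c yc]; apply/eqP.
apply: val_inj; move: (ltn_ord y) xT yT; rewrite /= yc.
case: c {yc} => [|[|c]]; rewrite ?mul0n ?mul1n //.
move=> h1 h2 _; have : (c.+2 * x) >= 2 * x by rewrite leq_mul2r orbT.
move: h1 h2; case: x => X ? /=; lia.
Qed.

Lemma exists_top n v : 0 < v -> v <= n.*2 ->
  exists k, n < v * 2 ^ k <= n.*2.
Proof.
have [d] := ubnP (n.*2 - v); elim: d v => [|d IH] v hd v0 vl; first by [].
case: (ltnP n v) => nv; first by exists 0; rewrite expn0 muln1 nv vl.
have [|||k hk] := IH (v * 2); try lia.
by exists k.+1; rewrite expnS mulnA.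
Qed.

Lemma exists_top_op n v : odd v -> v <= n.*2 ->
  exists t : num n, (t \in top n) && (op t == v).
Proof.
move=> ov vl; have v0 : 0 < v by case: v ov {vl}.
have [k /andP [h1 h2]] := exists_top v0 vl.
have lt : v * 2 ^ k < (n.*2).+1 by [].
exists (Ordinal lt). rewrite inE /= h1 op_mul //. by rewrite eqxx.
Qed.

Lemma card_top n : #|top n| = n.
Proof.
have lt (i : 'I_n) : n.+1 + i < (n.*2).+1 by have := ltn_ord i; lia.
have -> : top n = [set Ordinal (lt i) | i : 'I_n].
  apply/setP => -[X hX]; rewrite inE /=; apply/idP/imsetP.
    move=> nx; have lx : X - n.+1 < n by lia.
    by exists (Ordinal lx) => //; apply: val_inj => /=; lia.
  by case=> -[i hi] _ [->] /=; lia.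
rewrite card_imset ?card_ord // => -[i hi] [j hj] /(congr1 val) /= h.
by apply: val_inj => /=; lia.
Qed.

Lemma card_part (T : finType) k (C : 'I_k.+1 -> {set T}) (A : {set T}) :
  (forall x, x \in A -> exists! i, x \in C i) -> #|A| = \sum_i #|A :&: C i|.
Proof.
move=> H.
have h x : x \in A -> \sum_(i | x \in C i) 1 = 1.
  move=> xA; rewrite sum1_card; have [i0 [h0 u]] := H x xA.
  rewrite -(card1 i0); apply: eq_card => i; rewrite inE /=.
  apply/idP/eqP; [by move=> /u -> | by move=> ->].
rewrite -sum1_card.
transitivity (\sum_(x in A) \sum_(i | x \in C i) 1).
  by apply: eq_bigr => x xA; rewrite h.
under eq_bigr do rewrite big_mkcond /=.
rewrite exchange_big; apply: eq_bigr => i _.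
rewrite -big_mkcondr sum1_card; apply: eq_card => x.
by rewrite !inE.
Qed.

Lemma sum_eq_le k (f g : 'I_k.+1 -> nat) :
  (forall i, f i <= g i) -> \sum_i f i = \sum_i g i -> forall i, f i = g i.
Proof.
move=> le e i; apply/eqP; rewrite eqn_leq le /=; rewrite leqNgt; apply/negP => lt.
have : \sum_i f i < \sum_i g i.
  rewrite (bigD1 i) //= [X in _ < X](bigD1 i) //=.
  by rewrite -addSn leq_add // leq_sum.
by rewrite e ltnn.
Qed.

Lemma prod_split k (F : 'I_k.+1 -> nat) :
  \prod_i F i = F ord0 * \prod_(i < k.+1 | 0 < val i) F i.
Proof. by rewrite (bigD1 ord0) //=; congr (_ * _); apply: eq_bigl => i; rewrite lt0n. Qed.
Theorem mainTheorem9 (n k : nat) (C : 'I_k.+1 -> {set num n})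
  (Hunion : forall i : 'I_k.+1, exists S : {set num n},
      (forall u, u \in S -> odd (val u)) /\
      C i = \bigcup_(u in S) chain n (val u))
  (Hpart : forall u : num n, 0 < val u -> odd (val u) ->
      exists! i : 'I_k.+1, chain n (val u) \subset C i) :
  \prod_(i < k.+1 | 0 < val i) fstar (C i) <= fn n <=
  2 ^ #|C ord0| * \prod_(i < k.+1 | 0 < val i) fX (C i).
Proof.
have F1 i (x : num n) : x \in C i -> 0 < val x /\ chain n (op x) \subset C i.
  have [S [So ->]] := Hunion i.
  move=> /bigcupP [u uS]; rewrite in_chain ?So // => /andP [x0 /eqP ->].
  by split => //; apply: (bigcup_sup _ uS).
have F2 (x : num n) : op x < (n.*2).+1 by apply: leq_ltn_trans (op_le x) (ltn_ord x).
have F3 (x : num n) : 0 < val x -> exists! i, chain n (op x) \subset C i.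
  move=> x0; have := Hpart (Ordinal (F2 x)); apply => /=;
    [exact: op_gt0 | exact: op_odd].
have F4 (x : num n) : x \in ground n -> exists! i, x \in C i.
  rewrite inE => x0; have [i [hi u]] := F3 x x0.
  exists i; split; first by apply: (subsetP hi); rewrite in_chain ?op_odd ?x0 //=.
  by move=> j /F1 [_ /u].
have F5 i : C i \subset ground n.
  by apply/subsetP => x /F1 [x0 _]; rewrite inE.
have Fdisj i j (x : num n) : x \in C i -> x \in C j -> i = j.
  move=> xi xj; have [i0 [_ u]] := F4 x (subsetP (F5 i) _ xi).
  by rewrite -(u _ xi) -(u _ xj).
have Ftop : top n \subset ground n.
  by apply/subsetP => x; rewrite !inE; apply: leq_ltn_trans.
have F6 i : maxprim (C i) = #|top n :&: C i|.
  apply/eqP; rewrite eqn_leq; apply/andP; split; last first.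
    rewrite /maxprim; apply: leq_bigmax_cond.
    by rewrite subsetIr (primS (subsetIl _ _) (@top_prim n)).
  apply/bigmax_leqP => B /andP [sB pB].
  pose g (b : num n) := odflt b [pick t in top n :&: C i | op t == op b].
  have gP b : b \in B -> (g b \in top n :&: C i) && (op (g b) == op b).
    move=> bB; have [b0 sb] := F1 i b (subsetP sB _ bB).
    have [t /andP [tT /eqP ot]] := exists_top_op (op_odd b0) (ltnSE (F2 b)).
    rewrite /g; case: pickP => [t' /andP [] -> -> //|/(_ t)].
    rewrite inE tT ot eqxx /= andbT => /negP; case.
    apply: (subsetP sb); rewrite in_chain ?op_odd // ot eqxx andbT.
    by move: tT; rewrite inE; apply: leq_ltn_trans.
  rewrite -(card_in_imset (f := g)); last first.
    move=> b1 b2 b1B b2B e; apply: (prim_op pB b1B b2B).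
    by have /andP [_ /eqP <-] := gP _ b1B; have /andP [_ /eqP <-] := gP _ b2B; rewrite e.
  apply: subset_leq_card; apply/subsetP => t /imsetP [b bB ->].
  by have /andP [] := gP _ bB.
have Fsum (A : {set num n}) : A \subset ground n -> #|A| = \sum_i #|A :&: C i|.
  move=> sA; apply: card_part => x xA; exact: F4 (subsetP sA _ xA).
have Fn : \sum_i maxprim (C i) = n.
  rewrite -[RHS](card_top n) (Fsum _ Ftop); apply: eq_bigr => i _; by rewrite F6.
have F7 (A : {set num n}) : A \subset ground n -> primitive A -> #|A| = n ->
    forall i, #|A :&: C i| = maxprim (C i).
  move=> sA pA cA; apply: sum_eq_le; last by rewrite -Fsum // Fn.
  move=> i; rewrite /maxprim; apply: leq_bigmax_cond.
  by rewrite subsetIr (primS (subsetIl _ _) pA).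
have Fsub0 i : C i \subset C i by [].
apply/andP; split.
  pose F' (i : 'I_k.+1) : {set {set num n}} := if i == ord0 then [set top n :&: C ord0] else
    [set A : {set num n} | [&& A \subset C i, primitive A, #|A| == maxprim (C i) &
      [forall a in A, forall y in ground n, (val a %| val y) ==> (y \in C i)]]].
  have -> : \prod_(i < k.+1 | 0 < val i) fstar (C i) = #|family (fun i => mem (F' i))|.
    rewrite card_family foldrE big_map big_enum /= prod_split /F' eqxx cards1 mul1n.
    apply: eq_bigr => i i0; rewrite ifN //; by case: i i0 => -[].
  have gsub g i : g \in family (fun i => mem (F' i)) -> g i \subset C i.
    move=> /familyP /(_ i); rewrite /F'; case: eqP => [->|_].
      by rewrite inE => /eqP ->; apply: subsetIr.
    by rewrite inE => /and4P [].
  have gI g j : g \in family (fun i => mem (F' i)) -> \bigcup_i g i :&: C j = g j.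
    move=> gF; apply/setP => x; rewrite inE; apply/andP/idP.
      case=> /bigcupP [i _ xi] xj.
      by rewrite -(Fdisj _ _ x (subsetP (gsub _ _ gF) _ xi) xj).
    move=> xj; split; last exact: (subsetP (gsub _ _ gF)).
    by apply/bigcupP; exists j.
  rewrite -(card_in_imset (f := fun g : {ffun 'I_k.+1 -> {set num n}} => \bigcup_i g i)); last first.
    move=> g1 g2 g1F g2F e; apply/ffunP => j.
    by rewrite -(gI _ _ g1F) -(gI _ _ g2F) e.
  apply: subset_leq_card; apply/subsetP => U /imsetP [g gF ->].
  have gsG : \bigcup_i g i \subset ground n.
    apply/bigcupsP => i _; apply: subset_trans (gsub _ _ gF) (F5 i).
  rewrite inE gsG /=; apply/andP; split; last first.
    rewrite (Fsum _ gsG) -[X in _ == X]Fn; apply/eqP; apply: eq_bigr => j _.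
    rewrite gI //; move: gF => /familyP /(_ j); rewrite /F'; case: eqP => [->|_].
      by rewrite inE => /eqP ->; rewrite F6.
    by rewrite inE => /and4P [_ _ /eqP].
  apply/forallP => x; apply/implyP => /bigcupP [i _ xi]; apply/forallP => y;
    apply/implyP => /bigcupP [j _ yj]; apply/implyP => d; apply/eqP.
  have yG : y \in ground n by apply: (subsetP (F5 j)); apply: (subsetP (gsub _ _ gF)).
  move: gF => /familyP gF; move: (gF i); rewrite /F'; case: eqP => [ei|ni].
    rewrite inE => /eqP gi; rewrite gi in xi.
    have xT : x \in top n by move: xi; rewrite inE => /andP [].
    apply: (primP (@top_prim n) xT _ d); rewrite inE.
    move: xT yG; rewrite !inE => xT y0; apply: leq_trans xT (dvdn_leq y0 d).
  rewrite inE => /and4P [_ pg _ /forallP /(_ x) /implyP /(_ xi) /forallP /(_ y)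
    /implyP /(_ yG) /implyP /(_ d) yi].
  have yj' := subsetP (gsub _ _ (introT familyP gF)) _ yj.
  have eij := Fdisj _ _ _ yi yj'; subst j.
  exact: (primP pg xi yj d).
pose F (i : 'I_k.+1) : {set {set num n}} := if i == ord0 then powerset (C ord0) else
  [set A : {set num n} | [&& A \subset C i, primitive A & #|A| == maxprim (C i)]].
have -> : 2 ^ #|C ord0| * \prod_(i < k.+1 | 0 < val i) fX (C i) =
    #|family (fun i => mem (F i))|.
  rewrite card_family foldrE big_map big_enum /= prod_split /F eqxx card_powerset.
  congr (_ * _); apply: eq_bigr => i i0; rewrite ifN //; by case: i i0 => -[].
have Abig (A : {set num n}) : A \subset ground n -> A = \bigcup_i (A :&: C i).
  move=> sA; apply/setP => x; apply/idP/bigcupP.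
    by move=> xA; have [i [xi _]] := F4 x (subsetP sA _ xA); exists i; rewrite // inE xA.
  by case=> i _; rewrite inE => /andP [].
rewrite /fn -(card_in_imset (f := fun A : {set num n} => [ffun i => A :&: C i])); last first.
  move=> A1 A2; rewrite !inE => /and3P [s1 _ _] /and3P [s2 _ _] e.
  rewrite (Abig _ s1) (Abig _ s2); apply: eq_bigr => i _.
  by have := congr1 (fun f : {ffun 'I_k.+1 -> {set num n}} => f i) e; rewrite !ffunE.
apply: subset_leq_card; apply/subsetP => g /imsetP [A]; rewrite inE => /and3P [sA pA /eqP cA] ->.
apply/familyP => i; rewrite ffunE /F; case: eqP => [->|_].
  by rewrite powersetE subsetIr.
by rewrite inE subsetIr (primS (subsetIl _ _) pA) (F7 _ sA pA cA) eqxx.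
Qed.
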